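(* Let $m \ge 1$ and $n \ge 2m+3$ be integers, and write $p_j = n-2m+2j$. Then for every real $r$ with $|r|<1$, $$\int_{-1}^1 \frac{T_n(s)(1-s^2)^{m-\frac{1}{2}}}{(s-r)^4}\,ds = (-1)^{m+1}\left(\frac{1}{2}\right)^{2m+2}\frac{1}{3}\frac{\pi}{(1-r^2)^2}\sum_{j=0}^{2m-1}(-1)^j\binom{2m-1}{j}(p_j+1)\Big\{(p_j+2)(p_j+3)U_{p_j-2}(r)-\big[2p_j^2+4p_j-6\big]U_{p_j}(r)+p_j(p_j-1)U_{p_j+2}(r)\Big\},$$ where the integral is a Hadamard finite-part integral.
   Context: $T_k(s)=\cos(k\cos^{-1}s)$ and $U_k(s)=\frac{\sin((k+1)\cos^{-1}s)}{\sin(\cos^{-1}s)}$ are the Tchebyshev polynomials of the first and second kinds. For a positive integer $\alpha\ge 2$ and $|r|<1$, the integral $\int_{-1}^1 \frac{D(s)}{(s-r)^\alpha}ds$ is understood in the Hadamard finite-part sense; in particular it satisfies $\int_{-1}^1 \frac{D(s)}{(s-r)^{\alpha}}ds=\frac{1}{\alpha-1}\frac{d}{dr}\int_{-1}^1\frac{D(s)}{(s-r)^{\alpha-1}}ds$, where for $\alpha-1=1$ the right-hand integral is a Cauchy principal value. $\binom{a}{j}=\frac{a!}{j!(a-j)!}$. *)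

(* Defs.v *)
From Stdlib Require Import Reals Lra ClassicalEpsilon.
From Coquelicot Require Import Coquelicot.
Open Scope R_scope.

Definition chebT (k : nat) (s : R) : R := cos (INR k * acos s).
Definition chebU (k : nat) (s : R) : R := sin (INR (k + 1) * acos s) / sin (acos s).

Definition is_CPV (D : R -> R) (r l : R) : Prop :=
  filterlim
    (fun eps => RInt (fun s => D s / (s - r)) (-1) (r - eps)
              + RInt (fun s => D s / (s - r)) (r + eps) 1)
    (at_right 0) (locally l).

(* The principal value (0 by convention when it does not exist). *)
Definition CPV (D : R -> R) (r : R) : R :=
  match excluded_middle_informative (exists l, is_CPV D r l) with
  | left H => proj1_sig (constructive_indefinite_description _ H)
  | right _ => 0
  end.

(* hfp k D r = finite-part integral int_{-1}^1 D(s)/(s-r)^(k+1) ds, defined via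
   int D/(s-r)^a = 1/(a-1) d/dr int D/(s-r)^(a-1), base case a = 1: the CPV. *)
Fixpoint hfp (k : nat) (D : R -> R) (r : R) : R :=
  match k with
  | O => CPV D r
  | S k' => Derive (hfp k' D) r / INR (S k')
  end.

(* Density T_n(s) (1-s^2)^(m-1/2), written (1-s^2)^(m-1) sqrt(1-s^2) (m >= 1). *)
Definition dens (n m : nat) (s : R) : R :=
  chebT n s * ((1 - s ^ 2) ^ (m - 1) * sqrt (1 - s ^ 2)).

Definition pj (n m j : nat) : nat := n - 2 * m + 2 * j.

Definition rhs7 (n m : nat) (r : R) : R :=
  (-1) ^ (m + 1) * (1 / 2) ^ (2 * m + 2) * (1 / 3) * (PI / (1 - r ^ 2) ^ 2) *
  sum_f_R0 (fun j =>
     let p := pj n m j in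
     let P := INR p in
     (-1) ^ j * Binomial.C (2 * m - 1) j * (P + 1) *
     ((P + 2) * (P + 3) * chebU (p - 2) r
      - (2 * P ^ 2 + 4 * P - 6) * chebU p r
      + P * (P - 1) * chebU (p + 2) r))
    (2 * m - 1).

(* Main.v *)
Require Import Defs.
From Stdlib Require Import Reals Lra Lia Arith ClassicalEpsilon.
From Coquelicot Require Import Coquelicot.
Open Scope R_scope.

Lemma C_n_0' n : Binomial.C n 0 = 1.
Proof. unfold Binomial.C. rewrite Nat.sub_0_r. simpl Factorial.fact. rewrite INR_1, Rmult_1_l.
  field. apply INR_fact_neq_0. Qed.
Lemma C_n_n' n : Binomial.C n n = 1.
Proof. unfold Binomial.C. rewrite Nat.sub_diag. simpl Factorial.fact. rewrite INR_1, Rmult_1_r.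
  field. apply INR_fact_neq_0. Qed.

Definition Cp (M i : nat) : R := if Nat.leb i M then Binomial.C M i else 0.

Definition h2f (g : nat -> R) M (i : nat) : R := match i with O => 0 | S k => (-1)^i * Cp M k * g i end.

Lemma pascal_sum (g : nat -> R) (M : nat) :
  sum_f_R0 (fun i => (-1)^i * Binomial.C (S M) i * g i) (S M) =
  sum_f_R0 (fun i => (-1)^i * Binomial.C M i * (g i - g (S i))) M.
Proof.
  set (h1 := fun i => (-1)^i * Cp M i * g i).
  set (h2 := h2f g M).
  assert (E1 : sum_f_R0 (fun i => (-1)^i * Binomial.C M i * g i) M = sum_f_R0 h1 (S M)).
  { rewrite tech5. unfold h1, Cp. rewrite (proj2 (Nat.leb_gt _ _)) by lia.
    rewrite Rmult_0_r, Rmult_0_l, Rplus_0_r. apply sum_eq. intros i Hi.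
    rewrite (proj2 (Nat.leb_le _ _)) by lia. reflexivity. }
  assert (E2 : sum_f_R0 (fun i => (-1)^i * Binomial.C M i * g (S i)) M = - sum_f_R0 h2 (S M)).
  { rewrite (decomp_sum h2 (S M)) by lia. simpl pred. unfold h2 at 1, h2f. rewrite Rplus_0_l.
    rewrite <- (Rmult_1_l (sum_f_R0 (fun i => h2 (S i)) M)). rewrite Ropp_mult_distr_l.
    rewrite scal_sum. apply sum_eq. intros i Hi. unfold h2, h2f, Cp.
    rewrite (proj2 (Nat.leb_le _ _)) by lia. simpl pow. ring. }
  assert (E3 : forall a b : nat -> R, sum_f_R0 (fun i => a i - b i) M = sum_f_R0 a M - sum_f_R0 b M).
  { intros a b. unfold Rminus. rewrite sum_plus. f_equal.
    rewrite <- (Rmult_1_l (sum_f_R0 b M)), Ropp_mult_distr_l, scal_sum.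
    apply sum_eq; intros; ring. }
  rewrite (sum_eq (fun i => (-1)^i * Binomial.C M i * (g i - g (S i))) (fun i => (-1)^i * Binomial.C M i * g i - (-1)^i * Binomial.C M i * g (S i)))
    by (intros; ring).
  rewrite E3, E1, E2. unfold Rminus. rewrite Ropp_involutive, <- sum_plus.
  apply sum_eq. intros i Hi. unfold h1, h2, h2f, Cp. destruct i as [|k].
  - rewrite (proj2 (Nat.leb_le _ _)) by lia. rewrite !C_n_0'. ring.
  - destruct (Nat.eq_dec k M) as [->|Hk].
    + rewrite (proj2 (Nat.leb_gt _ _)) by lia. rewrite (proj2 (Nat.leb_le _ _)) by lia.
      rewrite !C_n_n'. ring.
    + rewrite (proj2 (Nat.leb_le _ _)) by lia. rewrite (proj2 (Nat.leb_le _ _)) by lia.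
      rewrite <- pascal by lia. ring.
Qed.

Definition sM (th : R) (M : nat) (k : R) : R :=
  sum_f_R0 (fun i => (-1)^i * Binomial.C M i * sin ((k - INR M + 2 * INR i) * th)) M.

Lemma sM_S th M k : sM th (S M) k = sM th M (k - 1) - sM th M (k + 1).
Proof.
  unfold sM. rewrite pascal_sum.
  assert (E3 : forall a b : nat -> R, sum_f_R0 (fun i => a i - b i) M = sum_f_R0 a M - sum_f_R0 b M).
  { intros a b. unfold Rminus. rewrite sum_plus. f_equal.
    rewrite <- (Rmult_1_l (sum_f_R0 b M)), Ropp_mult_distr_l, scal_sum.
    apply sum_eq; intros; ring. }
  rewrite <- E3. apply sum_eq. intros i Hi. rewrite !S_INR.
  replace ((k - (INR M + 1) + 2 * INR i)) with (k - 1 - INR M + 2 * INR i) by ring.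
  replace ((k - (INR M + 1) + 2 * (INR i + 1))) with (k + 1 - INR M + 2 * INR i) by ring.
  ring.
Qed.

Lemma sM_even th a : forall k, sM th (2 * a) k = (-4 * sin th ^ 2) ^ a * sin (k * th).
Proof.
  induction a as [|a IH]; intros k.
  - unfold sM. simpl. rewrite C_n_0'. replace (k - 0 + 2 * 0) with k by ring. ring.
  - replace (2 * S a)%nat with (S (S (2 * a))) by lia.
    rewrite sM_S, !sM_S, !IH.
    replace ((k - 1 - 1) * th) with (k * th - 2 * th) by ring.
    replace ((k - 1 + 1) * th) with (k * th) by ring.
    replace ((k + 1 - 1) * th) with (k * th) by ring.
    replace ((k + 1 + 1) * th) with (k * th + 2 * th) by ring.
    rewrite sin_minus, sin_plus, cos_2a_sin. simpl pow. ring.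
Qed.

Lemma sM_odd th a k : sM th (S (2 * a)) k = (-4 * sin th ^ 2) ^ a * (-2 * cos (k * th) * sin th).
Proof.
  rewrite sM_S, !sM_even.
  replace ((k - 1) * th) with (k * th - th) by ring.
  replace ((k + 1) * th) with (k * th + th) by ring.
  rewrite sin_minus, sin_plus. ring.
Qed.

Fixpoint Wp (N : nat) (s : R) : R :=
  match N with
  | O => 0
  | S O => sqrt (1 - s ^ 2)
  | S ((S k) as k1) => 2 * s * Wp k1 s - Wp k s
  end.

Lemma sin_rec (N : nat) (t : R) :
  sin (INR (S (S N)) * t) = 2 * cos t * sin (INR (S N) * t) - sin (INR N * t).
Proof.
  rewrite !S_INR.
  replace ((INR N + 1 + 1) * t) with ((INR N + 1) * t + t) by ring.
  replace (INR N * t) with ((INR N + 1) * t - t) by ring.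
  rewrite sin_plus, sin_minus. ring.
Qed.

Lemma cos_rec (N : nat) (t : R) :
  cos (INR (S (S N)) * t) = 2 * cos t * cos (INR (S N) * t) - cos (INR N * t).
Proof.
  rewrite !S_INR.
  replace ((INR N + 1 + 1) * t) with ((INR N + 1) * t + t) by ring.
  replace (INR N * t) with ((INR N + 1) * t - t) by ring.
  rewrite cos_plus, cos_minus. ring.
Qed.

Lemma Wp_cos (N : nat) (t : R) : 0 <= t <= PI -> Wp N (cos t) = sin (INR N * t).
Proof.
  intros Ht.
  assert (H : forall N, Wp N (cos t) = sin (INR N * t) /\ Wp (S N) (cos t) = sin (INR (S N) * t)).
  { clear N; intro N; induction N as [|N IH].
    - split; simpl. rewrite Rmult_0_l, sin_0; reflexivity.
      rewrite Rmult_1_l. replace (1 - cos t * (cos t * 1)) with (sin t ^ 2).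
      rewrite sqrt_pow2; [reflexivity | apply sin_ge_0; lra].
      pose proof (sin2_cos2 t). unfold Rsqr in H. nra.
    - destruct IH as [IH1 IH2]. split; [exact IH2|].
      change (Wp (S (S N)) (cos t)) with (2 * cos t * Wp (S N) (cos t) - Wp N (cos t)).
      rewrite IH1, IH2, sin_rec. reflexivity. }
  exact (proj1 (H N)).
Qed.

Lemma Wp_cont (N : nat) (x : R) : continuous (Wp N) x.
Proof.
  assert (H : forall N, continuous (Wp N) x /\ continuous (Wp (S N)) x).
  { clear N; intro N; induction N as [|N IH].
    - split; simpl. apply continuous_const.
      apply continuous_sqrt_comp. apply (continuous_minus (fun _ => 1) (fun s => s^2)).
      apply continuous_const. simpl.
      apply (continuous_mult (fun y => y) (fun y => y * 1)). apply continuous_id.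
      apply (continuous_mult (fun y => y) (fun y => 1)). apply continuous_id. apply continuous_const.
    - destruct IH as [IH1 IH2]. split; [exact IH2|].
      change (continuous (fun s => 2 * s * Wp (S N) s - Wp N s) x).
      apply (continuous_minus (fun s => 2 * s * Wp (S N) s) (Wp N)); [|exact IH1].
      apply (continuous_mult (fun s => 2 * s) (Wp (S N))); [|exact IH2].
      apply (continuous_mult (fun s => 2) (fun s => s)). apply continuous_const. apply continuous_id. }
  exact (proj1 (H N)).
Qed.

Ltac toR := match goal with |- ?a = ?b => change (@eq R a b) end.

Definition qq (r : R) := sqrt (1 - r ^ 2).
Definition Ef (r t : R) := 1 - r * cos t + qq r * sin t.

Definition Sf (k : nat) (t : R) : R :=
  match k with O => t | _ => sin (INR k * t) / INR k end.
Definition Phi (k : nat) (t : R) : R := (sin (INR (S (S k)) * t) / INR (S (S k)) - Sf k t) / 2.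

Fixpoint Af (r : R) (N : nat) (t : R) : R :=
  match N with
  | O => 0
  | S O => sin t + r * t - (1 - r ^ 2) / qq r * ln (Ef r t)
  | S ((S k) as k1) => 2 * Phi k t + 2 * r * Af r k1 t - Af r k t
  end.
Fixpoint Bf (r : R) (N : nat) : R :=
  match N with
  | O => 0
  | S O => (1 - r ^ 2) / qq r
  | S ((S k) as k1) => 2 * r * Bf r k1 - Bf r k
  end.
Definition Psi (r : R) (N : nat) (t : R) : R := Af r N t + Bf r N * (ln ((cos t - r) ^ 2) / 2).

Lemma qq_pos r : Rabs r < 1 -> 0 < qq r.
Proof. intros H. unfold qq. apply sqrt_lt_R0. apply Rabs_def2 in H. nra. Qed.
Lemma qq_sq r : Rabs r < 1 -> qq r * qq r = 1 - r ^ 2.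
Proof. intros H. unfold qq. apply sqrt_sqrt. apply Rabs_def2 in H. nra. Qed.

Lemma Ef_pos r t : Rabs r < 1 -> 0 <= t <= PI -> 0 < Ef r t.
Proof.
  intros Hr Ht. unfold Ef. pose proof (qq_pos r Hr). pose proof (sin_ge_0 t ltac:(lra) ltac:(lra)).
  pose proof (COS_bound t). apply Rabs_def2 in Hr.
  assert (r * cos t < 1). { destruct (Rle_dec 0 r); nra. } nra.
Qed.

Lemma Phi_deriv_gen (a t : R) : a <> 0 -> a + 2 <> 0 ->
  is_derive (fun t => (sin ((a+2) * t) / (a+2) - sin (a * t) / a) / 2) t (- sin t * sin ((a+1) * t)).
Proof.
  intros Ha Ha2. auto_derive; [repeat split; auto|]. toR.
  replace ((a + 2) * t) with ((a+1) * t + t) by ring.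
  replace (a * t) with ((a+1) * t - t) by ring.
  rewrite cos_plus, cos_minus. field. auto.
Qed.

Lemma Phi_deriv (k : nat) (t : R) : is_derive (Phi k) t (- sin t * sin (INR (S k) * t)).
Proof.
  destruct k as [|k].
  - unfold Phi, Sf. auto_derive; [exact I|]. toR.
    simpl INR. replace ((1+1) * t) with (2 * t) by ring. rewrite cos_2a_sin.
    replace (1 * t) with t by ring. field.
  - apply (is_derive_ext (fun t => (sin ((INR (S k)+2) * t) / (INR (S k)+2) - sin (INR (S k) * t) / INR (S k)) / 2)).
    { intros u. unfold Phi, Sf. replace (INR (S (S (S k)))) with (INR (S k) + 2) by (rewrite !S_INR; ring). reflexivity. }
    replace (INR (S (S k))) with (INR (S k) + 1) by (rewrite (S_INR (S k)); ring).
    apply Phi_deriv_gen. apply not_0_INR; lia. pose proof (pos_INR (S k)); lra.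
Qed.

Lemma is_derive_eq (f : R -> R) (x l l' : R) : is_derive f x l' -> l' = l -> is_derive f x l.
Proof. intros H ->. exact H. Qed.

Lemma log_deriv (r t : R) : cos t <> r ->
  is_derive (fun t => ln ((cos t - r) ^ 2) / 2) t (- sin t / (cos t - r)).
Proof.
  intros H. assert (cos t - r <> 0) by lra.
  auto_derive. { simpl. rewrite Rmult_1_r. apply Rsqr_pos_lt in H0. exact H0. }
  toR. field. auto.
Qed.

Lemma A1_deriv (r t : R) : Rabs r < 1 -> 0 < Ef r t ->
  is_derive (Af r 1) t (cos t + r - (1 - r^2) / qq r * (r * sin t + qq r * cos t) / Ef r t).
Proof.
  intros Hr H. pose proof (qq_pos r Hr). unfold Af. unfold Ef in *. auto_derive. { exact H. }
  toR. field. split; lra.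
Qed.

Lemma Psi1_deriv (r t : R) : Rabs r < 1 -> 0 < Ef r t -> cos t <> r ->
  is_derive (Psi r 1) t (- sin t * sin (INR 1 * t) / (cos t - r)).
Proof.
  intros Hr HE Hc. unfold Psi.
  eapply is_derive_eq.
  apply (is_derive_plus (Af r 1) (fun t => Bf r 1 * (ln ((cos t - r) ^ 2) / 2))).
  apply A1_deriv; auto.
  apply is_derive_scal. apply log_deriv; auto.
  toR. simpl Bf. rewrite Rmult_1_l. unfold scal; simpl; unfold mult; simpl.
  pose proof (qq_pos r Hr) as Hq. pose proof (qq_sq r Hr) as Hq2.
  pose proof (sin2_cos2 t) as Hsc. unfold Rsqr in Hsc.
  assert (Hcr : cos t - r <> 0) by lra.
  assert (HE0 : Ef r t <> 0) by lra.
  unfold plus; simpl.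
  set (q := qq r) in *. set (c := cos t) in *. set (s := sin t) in *.
  assert (E0: (r * s + q * c) * (c - r) = (q - s) * Ef r t).
  { unfold Ef. fold q c s.
    replace ((r * s + q * c) * (c - r)) with ((q - s) * (1 - r * c + q * s) + q * (s*s + c*c - 1) + s * (1 - r^2 - q*q)) by ring.
    rewrite Hsc, Hq2. ring. }
  assert (E: (r * s + q * c) / Ef r t = (q - s) / (c - r)).
  { apply (Rmult_eq_reg_r (Ef r t * (c - r))); [|apply Rmult_integral_contrapositive; auto].
    replace ((r*s+q*c)/Ef r t * (Ef r t*(c-r))) with ((r*s+q*c)*(c-r)) by (field; auto).
    replace ((q-s)/(c-r) * (Ef r t*(c-r))) with ((q-s)*Ef r t) by (field; auto). exact E0. }
  replace ((1 - r*(r*1))/q*(r*s+q*c)/Ef r t) with ((1 - r*(r*1))/q*((r*s+q*c)/Ef r t)) by (field; repeat split; lra).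
  rewrite E. replace (- s * s) with (c * c - 1) by lra.
  field. split; lra.
Qed.

Lemma Psi_SS r k u : Psi r (S (S k)) u = 2 * Phi k u + 2 * r * Psi r (S k) u - Psi r k u.
Proof. unfold Psi. simpl Af. simpl Bf. ring. Qed.

Lemma Psi_deriv (r t : R) (N : nat) : Rabs r < 1 -> 0 < Ef r t -> cos t <> r ->
  is_derive (Psi r N) t (- sin t * sin (INR N * t) / (cos t - r)).
Proof.
  intros Hr HE Hc.
  assert (H : forall N, is_derive (Psi r N) t (- sin t * sin (INR N * t) / (cos t - r)) /\
                        is_derive (Psi r (S N)) t (- sin t * sin (INR (S N) * t) / (cos t - r))).
  { clear N. intro N. induction N as [|N IH].
    - split; [|apply Psi1_deriv; auto].
      eapply is_derive_eq. apply (is_derive_ext (fun _ => 0)).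
      { intros u. unfold Psi. simpl. ring. } apply is_derive_const.
      toR. unfold zero; simpl. rewrite Rmult_0_l, sin_0. field. lra.
    - destruct IH as [IH1 IH2]. split; [exact IH2|].
      eapply is_derive_eq.
      apply (is_derive_ext (fun u => 2 * Phi N u + 2 * r * Psi r (S N) u - Psi r N u)).
      { intros u. rewrite Psi_SS. reflexivity. }
      apply (is_derive_minus (fun u => 2 * Phi N u + 2 * r * Psi r (S N) u) (Psi r N)); [|exact IH1].
      apply (is_derive_plus (fun u => 2 * Phi N u) (fun u => 2 * r * Psi r (S N) u)).
      apply (is_derive_scal (Phi N) t 2). apply Phi_deriv.
      apply (is_derive_scal (Psi r (S N)) t (2 * r)). exact IH2.
      toR. rewrite sin_rec. set (a := sin (INR (S N) * t)). set (b := sin (INR N * t)).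
      unfold minus, plus, opp, scal; simpl. unfold mult; simpl.
      field. lra. }
  exact (proj1 (H N)).
Qed.

Lemma sin_nPI (n : nat) : sin (INR n * PI) = 0.
Proof. apply sin_eq_0_1. exists (Z.of_nat n). rewrite <- INR_IZR_INZ. reflexivity. Qed.

Lemma Phi_ends (k : nat) : Phi k 0 - Phi k PI = match k with O => PI / 2 | _ => 0 end.
Proof.
  destruct k as [|j].
  - unfold Phi, Sf. rewrite !Rmult_0_r, !sin_0, !sin_nPI. field. apply not_0_INR; lia.
  - unfold Phi, Sf. rewrite !Rmult_0_r, !sin_0, !sin_nPI.
    assert (INR (S (S (S j))) <> 0) by (apply not_0_INR; lia).
    assert (INR (S j) <> 0) by (apply not_0_INR; lia). field; auto.
Qed.

Lemma ln_sq (x : R) : 0 < x -> ln (x ^ 2) / 2 = ln x.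
Proof. intros H. simpl. rewrite Rmult_1_r, ln_mult by auto. field. Qed.

Lemma Psi_ends (r : R) (N : nat) : Rabs r < 1 -> (1 <= N)%nat ->
  Psi r N 0 - Psi r N PI = - PI * cos (INR N * acos r).
Proof.
  intros Hr HN. pose proof (Rabs_def2 _ _ Hr) as [Hr1 Hr2].
  assert (Hc : cos (acos r) = r) by (apply cos_acos; lra).
  set (f := acos r) in *.
  assert (V1 : Psi r 1 0 - Psi r 1 PI = - PI * cos (INR 1 * f)).
  { unfold Psi, Af, Bf, Ef. rewrite sin_0, sin_PI, cos_0, cos_PI.
    replace (1 - r * 1 + qq r * 0) with (1 - r) by ring.
    replace (1 - r * -1 + qq r * 0) with (1 + r) by ring.
    replace ((-1 - r) ^ 2) with ((1 + r) ^ 2) by ring.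
    rewrite !ln_sq by lra. replace (INR 1 * f) with f by (simpl; ring). rewrite Hc. ring. }
  assert (H : forall k, Psi r (S k) 0 - Psi r (S k) PI = - PI * cos (INR (S k) * f) /\
                        Psi r (S (S k)) 0 - Psi r (S (S k)) PI = - PI * cos (INR (S (S k)) * f)).
  { intro k. induction k as [|k [IH1 IH2]].
    - split; [exact V1|]. rewrite !Psi_SS.
      replace (2 * Phi 0 0 + 2 * r * Psi r 1 0 - Psi r 0 0 - (2 * Phi 0 PI + 2 * r * Psi r 1 PI - Psi r 0 PI))
        with (2 * (Phi 0 0 - Phi 0 PI) + 2 * r * (Psi r 1 0 - Psi r 1 PI) - (Psi r 0 0 - Psi r 0 PI)) by ring.
      rewrite Phi_ends, V1. unfold Psi; simpl Af; simpl Bf.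
      replace (INR 2 * f) with (2 * f) by (simpl; ring). rewrite cos_2a_cos, Hc.
      replace (INR 1 * f) with f by (simpl; ring). rewrite Hc. field.
    - split; [exact IH2|]. rewrite (Psi_SS r (S k) 0), (Psi_SS r (S k) PI).
      replace (2 * Phi (S k) 0 + 2 * r * Psi r (S (S k)) 0 - Psi r (S k) 0 - (2 * Phi (S k) PI + 2 * r * Psi r (S (S k)) PI - Psi r (S k) PI))
        with (2 * (Phi (S k) 0 - Phi (S k) PI) + 2 * r * (Psi r (S (S k)) 0 - Psi r (S (S k)) PI) - (Psi r (S k) 0 - Psi r (S k) PI)) by ring.
      rewrite Phi_ends, IH1, IH2, (cos_rec (S k)), Hc. ring. }
  destruct N as [|N]; [lia|]. apply H.
Qed.

Lemma acos_deriv (x : R) : -1 < x < 1 -> is_derive acos x (-1 / sqrt (1 - x²)).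
Proof.
  intros H. apply is_derive_Reals. apply (derive_pt_eq_1 _ _ _ (derivable_pt_acos x H)).
  apply derive_pt_acos.
Qed.

Lemma acos_cont (x : R) : -1 < x < 1 -> continuous acos x.
Proof. intros H. apply (ex_derive_continuous acos x). exists (-1 / sqrt (1 - x²)). apply acos_deriv; auto. Qed.

Lemma in_0_PI_between a b x : 0 <= a <= PI -> 0 <= b <= PI -> Rmin a b <= x <= Rmax a b -> 0 <= x <= PI.
Proof. intros Ha Hb Hx. unfold Rmin, Rmax in Hx. destruct (Rle_dec a b); lra. Qed.

Lemma RInt_subst (N : nat) (r a b : R) : Rabs r < 1 -> 0 <= a <= PI -> 0 <= b <= PI ->
  (forall x, Rmin a b <= x <= Rmax a b -> cos x <> r) ->
  RInt (fun s => Wp N s / (s - r)) (cos a) (cos b) = Psi r N b - Psi r N a.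
Proof.
  intros Hr Ha Hb Hc.
  assert (H1 : is_RInt (fun y => scal (- sin y) (Wp N (cos y) / (cos y - r))) a b
                 (RInt (fun s => Wp N s / (s - r)) (cos a) (cos b))).
  { apply (is_RInt_comp (fun s => Wp N s / (s - r)) cos (fun y => - sin y) a b).
    - intros x Hx. specialize (Hc x Hx). unfold Rdiv.
      apply (continuous_mult (Wp N) (fun s => / (s - r))). apply Wp_cont.
      apply continuous_Rinv_comp. apply (continuous_minus (fun s => s) (fun _ => r)).
      apply continuous_id. apply continuous_const. simpl. lra.
    - intros x Hx. split. auto_derive; auto. toR. ring.
      apply (ex_derive_continuous (fun y => - sin y)). auto_derive; auto. }
  assert (H2 : is_RInt (fun t => - sin t * sin (INR N * t) / (cos t - r)) a b (minus (Psi r N b) (Psi r N a))).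
  { apply (is_RInt_derive (Psi r N)).
    - intros x Hx. assert (Hx0 := in_0_PI_between a b x Ha Hb Hx). apply Psi_deriv; [auto | apply Ef_pos; auto | apply Hc; auto].
    - intros x Hx. apply (ex_derive_continuous (fun t => - sin t * sin (INR N * t) / (cos t - r))).
      specialize (Hc x Hx). auto_derive. lra. }
  assert (H3 : is_RInt (fun y => scal (- sin y) (Wp N (cos y) / (cos y - r))) a b (minus (Psi r N b) (Psi r N a))).
  2:{ rewrite <- (is_RInt_unique _ _ _ _ H1). rewrite (is_RInt_unique _ _ _ _ H3). reflexivity. }
  apply (is_RInt_ext (fun t => - sin t * sin (INR N * t) / (cos t - r))).
  + intros x Hx. unfold scal; simpl; unfold mult; simpl.
    assert (Hx' : Rmin a b <= x <= Rmax a b) by lra.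
    rewrite Wp_cos by (apply (in_0_PI_between a b x Ha Hb Hx')).
    field. apply (Rminus_eq_contra _ _ (Hc x Hx')).
  + exact H2.
Qed.


Lemma Af_SS r k u : Af r (S (S k)) u = 2 * Phi k u + 2 * r * Af r (S k) u - Af r k u.
Proof. simpl Af. reflexivity. Qed.


Lemma Af_ex_derive (r t : R) (N : nat) : Rabs r < 1 -> 0 < Ef r t -> ex_derive (Af r N) t.
Proof.
  intros Hr HE. 
  assert (H : forall N, ex_derive (Af r N) t /\ ex_derive (Af r (S N)) t).
  { clear N. intro N. induction N as [|N [IH1 IH2]].
    - split. exact (ex_derive_const 0 t). exact (ex_intro _ _ (A1_deriv r t Hr HE)).
    - split. exact IH2.
      assert (HH : ex_derive (fun u => 2 * Phi N u + 2 * r * Af r (S N) u - Af r N u) t).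
      { assert (P1 : ex_derive (fun u => 2 * Phi N u) t).
        { exact (ex_derive_scal (Phi N) 2 t (ex_intro _ _ (Phi_deriv N t))). }
        assert (P2 : ex_derive (fun u => 2 * r * Af r (S N) u) t).
        { exact (ex_derive_scal (Af r (S N)) (2 * r) t IH2). }
        exact (ex_derive_minus _ _ t (ex_derive_plus _ _ t P1 P2) IH1). }
      
      generalize (ex_derive_ext _ (Af r (S (S N))) t (fun u => eq_sym (Af_SS r N u)) HH). 
      intros HHH. exact HHH. }
  exact (proj1 (H N)).
Qed.

Lemma cos_acos_lt (x : R) : -1 < x < 1 -> 0 < acos x < PI.
Proof. apply acos_bound_lt. Qed.

Lemma CPV_Wp (N : nat) (r : R) : Rabs r < 1 -> (1 <= N)%nat ->
  is_CPV (Wp N) r (- PI * cos (INR N * acos r)).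
Proof.
  intros Hr HN. pose proof (Rabs_def2 _ _ Hr) as [Hr1 Hr2].
  set (V := - PI * cos (INR N * acos r)).
  set (d := 1 - Rabs r).
  assert (Hd : 0 < d) by (unfold d; lra).
  set (g := fun e => Af r N (acos (r - e)) - Af r N (acos (r + e)) + V).
  unfold is_CPV.
  apply (filterlim_ext_loc g).
  - exists (mkposreal d Hd). intros e He Hpos. simpl in He.
    unfold ball in He; simpl in He; unfold AbsRing_ball, abs, minus, plus, opp in He; simpl in He.
    rewrite Ropp_0, Rplus_0_r, Rabs_pos_eq in He by lra.
    assert (Hrd: -1 < r - e /\ r + e < 1) by (unfold d in He; apply Rabs_def2 in Hr; destruct (Rle_dec 0 r); [rewrite Rabs_pos_eq in He by lra | rewrite Rabs_left in He by lra]; lra).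
    set (t1 := acos (r - e)). set (t2 := acos (r + e)).
    assert (Ht1 : cos t1 = r - e) by (apply cos_acos; lra).
    assert (Ht2 : cos t2 = r + e) by (apply cos_acos; lra).
    pose proof (acos_bound (r - e)) as Hb1. pose proof (acos_bound (r + e)) as Hb2. fold t1 t2 in Hb1, Hb2.
    assert (I1 : RInt (fun s => Wp N s / (s - r)) (-1) (r - e) = Psi r N t1 - Psi r N PI).
    { rewrite <- cos_PI, <- Ht1. pose proof PI_RGT_0. apply RInt_subst; [exact Hr | lra | exact Hb1 | ].
      intros x Hx. assert (t1 <= x <= PI) by (unfold Rmin, Rmax in Hx; destruct (Rle_dec PI t1); lra).
        destruct (Req_dec x t1) as [->|Hne]. lra.
        pose proof (cos_decreasing_1 t1 x ltac:(lra) ltac:(lra) ltac:(lra) ltac:(lra) ltac:(lra)). lra. }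
    assert (I2 : RInt (fun s => Wp N s / (s - r)) (r + e) 1 = Psi r N 0 - Psi r N t2).
    { rewrite <- Ht2. replace 1 with (cos 0) by apply cos_0. pose proof PI_RGT_0.
      apply RInt_subst; [exact Hr | exact Hb2 | lra | ].
      intros x Hx. assert (0 <= x <= t2) by (unfold Rmin, Rmax in Hx; destruct (Rle_dec t2 0); lra).
        destruct (Req_dec x t2) as [->|Hne]. lra.
        pose proof (cos_decreasing_1 x t2 ltac:(lra) ltac:(lra) ltac:(lra) ltac:(lra) ltac:(lra)). lra. }
    rewrite I1, I2.
    unfold g, V. rewrite <- (Psi_ends r N Hr HN). fold t1 t2. unfold Psi.
    rewrite Ht1, Ht2. replace ((r - e - r) ^ 2) with ((r + e - r) ^ 2) by ring. ring.
  - apply (filterlim_filter_le_1 (F := locally 0)). apply filter_le_within.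
    assert (Hg0 : g 0 = V) by (unfold g; rewrite Rminus_0_r, Rplus_0_r; ring).
    assert (Hc : continuous (fun e => Af r N (acos e)) r).
    { apply (continuous_comp acos (Af r N)). apply acos_cont; lra.
      apply (ex_derive_continuous (Af r N)). apply Af_ex_derive; auto. apply Ef_pos; auto.
      pose proof (acos_bound r); lra. }
    assert (Hcg : continuous g 0).
    { unfold g. apply (continuous_plus (fun e => Af r N (acos (r - e)) - Af r N (acos (r + e))) (fun _ => V)).
      2: apply continuous_const.
      apply (continuous_minus (fun e => Af r N (acos (r - e))) (fun e => Af r N (acos (r + e)))).
      + apply (continuous_comp (fun e => r - e) (fun e => Af r N (acos e))).
        apply (continuous_minus (fun _ => r) (fun e => e)). apply continuous_const. apply continuous_id.
        rewrite Rminus_0_r. exact Hc.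
      + apply (continuous_comp (fun e => r + e) (fun e => Af r N (acos e))).
        apply (continuous_plus (fun _ => r) (fun e => e)). apply continuous_const. apply continuous_id.
        rewrite Rplus_0_r. exact Hc. }
    unfold continuous in Hcg. rewrite Hg0 in Hcg. exact Hcg.
Qed.

Definition CPVexpr (f : R -> R) (r e : R) : R :=
  RInt (fun s => f s / (s - r)) (-1) (r - e) + RInt (fun s => f s / (s - r)) (r + e) 1.

Lemma is_CPV_expr f r l : is_CPV f r l <-> filterlim (CPVexpr f r) (at_right 0) (locally l).
Proof. unfold is_CPV, CPVexpr. tauto. Qed.

Definition contR (f : R -> R) := forall x, continuous f x.

Lemma exRInt_div (f : R -> R) (r a b : R) : contR f ->
  (forall z, Rmin a b <= z <= Rmax a b -> z <> r) -> ex_RInt (fun s => f s / (s - r)) a b.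
Proof.
  intros Hf Hz. apply (@ex_RInt_continuous R_CompleteNormedModule). intros z Hz'. specialize (Hz z Hz'). unfold Rdiv.
  apply (continuous_mult f (fun s => / (s - r))). apply Hf.
  apply continuous_Rinv_comp. apply (continuous_minus (fun s => s) (fun _ => r)).
  apply continuous_id. apply continuous_const. simpl. lra.
Qed.

Lemma ex_pieces (f : R -> R) (r e : R) : contR f -> -1 < r < 1 -> 0 < e ->
  ex_RInt (fun s => f s / (s - r)) (-1) (r - e) /\ ex_RInt (fun s => f s / (s - r)) (r + e) 1.
Proof.
  intros Hf Hr He. split; apply exRInt_div; auto; intros z Hz; unfold Rmin, Rmax in Hz.
  - intros Heq. destruct (Rle_dec (-1) (r - e)); lra.
  - intros Heq. destruct (Rle_dec (r + e) 1); lra.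
Qed.

Lemma CPVexpr_plus f g r e : contR f -> contR g -> -1 < r < 1 -> 0 < e ->
  CPVexpr (fun s => f s + g s) r e = CPVexpr f r e + CPVexpr g r e.
Proof.
  intros Hf Hg Hr He. destruct (ex_pieces f r e Hf Hr He) as [F1 F2]. destruct (ex_pieces g r e Hg Hr He) as [G1 G2].
  unfold CPVexpr.
  rewrite (RInt_ext (fun s => (f s + g s) / (s - r)) (fun s => plus (f s / (s - r)) (g s / (s - r))))
    by (intros; unfold plus; simpl; unfold Rdiv; ring).
  rewrite (RInt_ext (fun s => (f s + g s) / (s - r)) (fun s => plus (f s / (s - r)) (g s / (s - r))) (r + e))
    by (intros; unfold plus; simpl; unfold Rdiv; ring).
  rewrite (RInt_plus (fun s => f s / (s - r)) (fun s => g s / (s - r)) (-1)) by auto.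
  rewrite (RInt_plus (fun s => f s / (s - r)) (fun s => g s / (s - r)) (r + e)) by auto.
  unfold plus; simpl. ring.
Qed.

Lemma CPVexpr_scal f c r e : contR f -> -1 < r < 1 -> 0 < e ->
  CPVexpr (fun s => c * f s) r e = c * CPVexpr f r e.
Proof.
  intros Hf Hr He. destruct (ex_pieces f r e Hf Hr He) as [F1 F2].
  unfold CPVexpr.
  rewrite (RInt_ext (fun s => c * f s / (s - r)) (fun s => scal c (f s / (s - r))) (-1))
    by (intros; unfold scal; simpl; unfold mult; simpl; unfold Rdiv; ring).
  rewrite (RInt_ext (fun s => c * f s / (s - r)) (fun s => scal c (f s / (s - r))) (r + e))
    by (intros; unfold scal; simpl; unfold mult; simpl; unfold Rdiv; ring).
  rewrite (RInt_scal (fun s => f s / (s - r)) (-1)) by auto.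
  rewrite (RInt_scal (fun s => f s / (s - r)) (r + e)) by auto.
  unfold scal; simpl; unfold mult; simpl. ring.
Qed.

Lemma at_right_pos : at_right 0 (fun e => 0 < e).
Proof. exists (mkposreal 1 Rlt_0_1). intros y _ Hy. exact Hy. Qed.

Lemma CPV_plus f g r a b : contR f -> contR g -> -1 < r < 1 ->
  is_CPV f r a -> is_CPV g r b -> is_CPV (fun s => f s + g s) r (a + b).
Proof.
  intros Hf Hg Hr Ha Hb. rewrite is_CPV_expr in *.
  apply (filterlim_ext_loc (fun e => CPVexpr f r e + CPVexpr g r e)).
  - generalize at_right_pos. apply filter_imp. intros e He. symmetry. apply CPVexpr_plus; auto.
  - apply (filterlim_comp_2 (CPVexpr f r) (CPVexpr g r) Rplus Ha Hb).
    apply (filterlim_plus a b).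
Qed.

Lemma CPV_scal f c r a : contR f -> -1 < r < 1 ->
  is_CPV f r a -> is_CPV (fun s => c * f s) r (c * a).
Proof.
  intros Hf Hr Ha. rewrite is_CPV_expr in *.
  apply (filterlim_ext_loc (fun e => c * CPVexpr f r e)).
  - generalize at_right_pos. apply filter_imp. intros e He. symmetry. apply CPVexpr_scal; auto.
  - apply (filterlim_comp _ _ _ (CPVexpr f r) (fun x => c * x) _ (locally a) _ Ha).
    apply (filterlim_scal_r c a).
Qed.

Lemma contR_plus f g : contR f -> contR g -> contR (fun s => f s + g s).
Proof. intros Hf Hg x. apply (continuous_plus f g); auto. Qed.
Lemma contR_scal f c : contR f -> contR (fun s => c * f s).
Proof. intros Hf x. apply (continuous_mult (fun _ => c) f). apply continuous_const. auto. Qed.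

Lemma contR_sum (F : nat -> R -> R) (c : nat -> R) M : (forall j, contR (F j)) ->
  contR (fun s => sum_f_R0 (fun j => c j * F j s) M).
Proof.
  intros HF. induction M as [|M IH].
  - simpl. apply contR_scal, HF.
  - simpl. apply (contR_plus _ (fun s => c (S M) * F (S M) s)); auto. apply contR_scal, HF.
Qed.

Lemma CPV_sum (F : nat -> R -> R) (c L : nat -> R) r M : (forall j, contR (F j)) -> -1 < r < 1 ->
  (forall j, is_CPV (F j) r (L j)) ->
  is_CPV (fun s => sum_f_R0 (fun j => c j * F j s) M) r (sum_f_R0 (fun j => c j * L j) M).
Proof.
  intros HF Hr HL. induction M as [|M IH].
  - simpl. apply CPV_scal; auto.
  - simpl. apply (CPV_plus _ (fun s => c (S M) * F (S M) s)); auto.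
    apply contR_sum; auto. apply contR_scal, HF. apply CPV_scal; auto.
Qed.

Lemma CPV_ext f g r a : -1 < r < 1 -> (forall s, -1 <= s <= 1 -> f s = g s) ->
  is_CPV f r a -> is_CPV g r a.
Proof.
  intros Hr Hfg Ha. rewrite is_CPV_expr in *.
  apply (filterlim_ext_loc (CPVexpr f r)); auto.
  assert (Hd : 0 < Rmin (1 + r) (1 - r)) by (apply Rmin_glb_lt; lra).
  exists (mkposreal _ Hd). intros e He Hpos. simpl in He.
  unfold ball in He; simpl in He; unfold AbsRing_ball, abs, minus, plus, opp in He; simpl in He.
  rewrite Ropp_0, Rplus_0_r, Rabs_pos_eq in He by lra.
  pose proof (Rmin_l (1 + r) (1 - r)). pose proof (Rmin_r (1 + r) (1 - r)).
  unfold CPVexpr. f_equal; apply RInt_ext; intros x Hx; unfold Rmin, Rmax in Hx.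
  - destruct (Rle_dec (-1) (r - e)); rewrite Hfg; auto; lra.
  - destruct (Rle_dec (r + e) 1); rewrite Hfg; auto; lra.
Qed.

Definition Kc (m : nat) : R := (-4) ^ (m - 1) * (-2).
Definition cc (m j : nat) : R := (-1) ^ j * Binomial.C (2 * m - 1) j / Kc m.

Lemma Kc_nz m : Kc m <> 0.
Proof. unfold Kc. apply Rmult_integral_contrapositive. split; [apply pow_nonzero|]; lra. Qed.

Lemma sum_div (a : nat -> R) (K : R) M : sum_f_R0 (fun j => a j / K) M = sum_f_R0 a M / K.
Proof. induction M as [|M IH]; simpl; [reflexivity|]. rewrite IH. unfold Rdiv. ring. Qed.

Lemma dens_cos n m t : (1 <= m)%nat -> 0 <= t <= PI ->
  dens n m (cos t) = cos (INR n * t) * sin t ^ (2 * m - 1).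
Proof.
  intros Hm Ht. unfold dens, chebT. rewrite acos_cos by auto.
  assert (Hs : 1 - cos t ^ 2 = sin t ^ 2).
  { pose proof (sin2_cos2 t). unfold Rsqr in H. simpl. nra. }
  rewrite Hs. rewrite sqrt_pow2 by (apply sin_ge_0; lra).
  replace (2 * m - 1)%nat with (2 * (m - 1) + 1)%nat by lia.
  rewrite pow_add, pow_mult. simpl. ring.
Qed.

Lemma sum_cos n m t : (1 <= m)%nat -> (2 * m <= n)%nat -> 0 <= t <= PI ->
  sum_f_R0 (fun j => cc m j * Wp (S (pj n m j)) (cos t)) (2 * m - 1) = cos (INR n * t) * sin t ^ (2 * m - 1).
Proof.
  intros Hm Hn Ht.
  rewrite (sum_eq _ (fun j => ((-1) ^ j * Binomial.C (2 * m - 1) j * sin ((INR n - INR (2 * m - 1) + 2 * INR j) * t)) / Kc m)).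
  2:{ intros j Hj. unfold cc. rewrite Wp_cos by auto.
      replace (INR (S (pj n m j))) with (INR n - INR (2 * m - 1) + 2 * INR j). unfold Rdiv; ring.
      unfold pj. rewrite S_INR, plus_INR, (minus_INR n (2 * m)) by lia. rewrite (minus_INR (2 * m) 1) by lia.
      rewrite !mult_INR. simpl. ring. }
  rewrite sum_div. fold (sM t (2 * m - 1) (INR n)).
  replace (2 * m - 1)%nat with (S (2 * (m - 1))) by lia.
  rewrite sM_odd. unfold Kc.
  replace (S (2 * (m - 1))) with (2 * (m - 1) + 1)%nat by lia.
  rewrite pow_add, pow_mult, Rpow_mult_distr. field; repeat split; try (apply pow_nonzero); lra.
Qed.

Lemma dens_decomp n m s : (1 <= m)%nat -> (2 * m <= n)%nat -> -1 <= s <= 1 ->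
  dens n m s = sum_f_R0 (fun j => cc m j * Wp (S (pj n m j)) s) (2 * m - 1).
Proof.
  intros Hm Hn Hs. rewrite <- (cos_acos s) by auto.
  rewrite dens_cos, sum_cos by (auto; apply acos_bound). reflexivity.
Qed.

Lemma sin_acos_pos x : -1 < x < 1 -> 0 < sin (acos x).
Proof. intros H. apply sin_gt_0; apply acos_bound_lt; auto. Qed.

Lemma sin_acos_sq x : -1 < x < 1 -> sin (acos x) * sin (acos x) = 1 - x ^ 2.
Proof. intros H. pose proof (sin2_cos2 (acos x)). rewrite cos_acos in H0 by lra. unfold Rsqr in H0. simpl. lra. Qed.

Lemma chebT_deriv N x : -1 < x < 1 -> is_derive (chebT (S N)) x (INR (S N) * chebU N x).
Proof.
  intros Hx. unfold chebT.
  pose proof (sin_acos_pos x Hx) as Hs. pose proof (sin_acos_sq x Hx) as Hs2.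
  eapply is_derive_eq.
  apply (is_derive_comp (fun t => cos (INR (S N) * t)) acos x).
  { auto_derive; auto. } apply acos_deriv; auto.
  unfold chebU. rewrite Nat.add_1_r. unfold scal; simpl; unfold mult; simpl.
  rewrite sin_acos by lra. rewrite sin_acos in Hs by lra.
  field. lra.
Qed.

Definition dU (k : nat) (x : R) : R :=
  ((INR k + 3) * chebU k x - (INR k + 1) * chebU (S (S k)) x) / (2 * (1 - x ^ 2)).

Lemma Ucomp_deriv (A x : R) : -1 < x < 1 ->
  is_derive (fun x => sin (A * acos x) / sin (acos x)) x
    ((-1 / sin (acos x)) * ((A * cos (A * acos x) * sin (acos x) - sin (A * acos x) * cos (acos x)) / (sin (acos x) * sin (acos x)))).
Proof.
  intros Hx. pose proof (sin_acos_pos x Hx) as Hs.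
  eapply is_derive_eq.
  apply (is_derive_comp (fun t => sin (A * t) / sin t) acos x).
  { auto_derive; auto. lra. } apply acos_deriv; auto.
  unfold scal; simpl; unfold mult; simpl.
  assert (Eq : sqrt (1 - x²) = sin (acos x)) by (rewrite sin_acos; lra).
  rewrite Eq. field. lra.
Qed.

Lemma chebU_deriv k x : -1 < x < 1 -> is_derive (chebU (S k)) x (dU k x).
Proof.
  intros Hx. pose proof (sin_acos_pos x Hx) as Hs. pose proof (sin_acos_sq x Hx) as Hs2.
  eapply is_derive_eq. apply (Ucomp_deriv (INR (S k + 1)) x Hx).
  unfold dU, chebU. rewrite <- Hs2.
  set (f := acos x) in *. assert (Hc : cos f = x) by (apply cos_acos; lra).
  replace (INR (S k + 1)) with (INR k + 2) by (rewrite Nat.add_1_r, !S_INR; ring).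
  replace (INR (k + 1)) with (INR k + 2 - 1) by (rewrite plus_INR; simpl; ring).
  replace (INR (S (S k) + 1)) with (INR k + 2 + 1) by (rewrite Nat.add_1_r, !S_INR; ring).
  set (A := INR k + 2).
  replace ((A - 1) * f) with (A * f - f) by ring.
  replace ((A + 1) * f) with (A * f + f) by ring.
  replace (INR k + 3) with (A + 1) by (unfold A; ring).
  replace (INR k + 1) with (A - 1) by (unfold A; ring).
  rewrite sin_minus, sin_plus, Hc. field. lra.
Qed.

Lemma chebU_rec k x : -1 < x < 1 -> 2 * x * chebU (S k) x = chebU (S (S k)) x + chebU k x.
Proof.
  intros Hx. pose proof (sin_acos_pos x Hx) as Hs. unfold chebU.
  set (f := acos x) in *. assert (Hc : cos f = x) by (apply cos_acos; lra).
  replace (INR (S (S k) + 1)) with (INR (S k + 1) + 1) by (rewrite !plus_INR, !S_INR; ring).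
  replace (INR (k + 1)) with (INR (S k + 1) - 1) by (rewrite !plus_INR, !S_INR; ring).
  set (A := INR (S k + 1)).
  replace ((A + 1) * f) with (A * f + f) by ring.
  replace ((A - 1) * f) with (A * f - f) by ring.
  rewrite sin_plus, sin_minus, Hc. field. lra.
Qed.

Lemma quot_deriv (u v : R -> R) (c1 c2 x du dv : R) : -1 < x < 1 ->
  is_derive u x du -> is_derive v x dv ->
  is_derive (fun x => (c1 * u x - c2 * v x) / (2 * (1 - x ^ 2))) x
    (((c1 * du - c2 * dv) * (2 * (1 - x ^ 2)) - (c1 * u x - c2 * v x) * (- (4 * x))) / (2 * (1 - x ^ 2)) ^ 2).
Proof.
  intros Hx Hu Hv.
  apply (is_derive_div (fun x => c1 * u x - c2 * v x) (fun x => 2 * (1 - x ^ 2))).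
  - apply (is_derive_minus (fun x => c1 * u x) (fun x => c2 * v x)).
    apply (is_derive_scal u x c1 du Hu). apply (is_derive_scal v x c2 dv Hv).
  - eapply is_derive_eq. auto_derive; auto. toR. ring.
  - nra.
Qed.

Definition ddU (a : nat) (x : R) : R :=
  (((INR (S (S a)) + 3) * dU (S a) x - (INR (S (S a)) + 1) * dU (S (S (S a))) x) * (2 * (1 - x ^ 2))
   - ((INR (S (S a)) + 3) * chebU (S (S a)) x - (INR (S (S a)) + 1) * chebU (S (S (S (S a)))) x) * (- (4 * x)))
  / (2 * (1 - x ^ 2)) ^ 2.

Lemma dU_deriv a x : -1 < x < 1 -> is_derive (dU (S (S a))) x (ddU a x).
Proof.
  intros Hx. unfold ddU.
  apply (is_derive_ext (fun x => ((INR (S (S a)) + 3) * chebU (S (S a)) x - (INR (S (S a)) + 1) * chebU (S (S (S (S a)))) x) / (2 * (1 - x ^ 2)))).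
  { intros t. reflexivity. }
  apply quot_deriv; auto; apply chebU_deriv; auto.
Qed.

Lemma ddU_val a x : -1 < x < 1 ->
  ddU a x = ((INR a + 5) * (INR a + 6) * chebU (S a) x
             - (2 * (INR a + 3) ^ 2 + 4 * (INR a + 3) - 6) * chebU (S (S (S a))) x
             + (INR a + 3) * (INR a + 2) * chebU (S (S (S (S (S a))))) x) / (4 * (1 - x ^ 2) ^ 2).
Proof.
  intros Hx. unfold ddU, dU.
  assert (Hw : 1 - x ^ 2 <> 0) by nra.
  assert (R1 := chebU_rec (S a) x Hx). assert (R2 := chebU_rec (S (S (S a))) x Hx).
  set (U1 := chebU (S a) x) in *. set (U2 := chebU (S (S a)) x) in *. set (U3 := chebU (S (S (S a))) x) in *.
  set (U4 := chebU (S (S (S (S a)))) x) in *. set (U5 := chebU (S (S (S (S (S a))))) x) in *.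
  replace (((INR (S (S a)) + 3) * U2 - (INR (S (S a)) + 1) * U4) * - (4 * x))
    with (-2 * ((INR (S (S a)) + 3) * (2 * x * U2) - (INR (S (S a)) + 1) * (2 * x * U4))) by ring.
  rewrite R1, R2. rewrite !S_INR. field. auto.
Qed.

Lemma is_derive_sum (f df : nat -> R -> R) (c : nat -> R) M x :
  (forall j, is_derive (f j) x (df j x)) ->
  is_derive (fun x => sum_f_R0 (fun j => c j * f j x) M) x (sum_f_R0 (fun j => c j * df j x) M).
Proof.
  intros H. induction M as [|M IH].
  - simpl. apply (is_derive_scal (f 0%nat) x (c 0%nat)). apply H.
  - simpl. apply (is_derive_plus (fun x => sum_f_R0 (fun j => c j * f j x) M) (fun x => c (S M) * f (S M) x)).
    exact IH. apply (is_derive_scal (f (S M)) x (c (S M))). apply H.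
Qed.

Lemma pj_ge3 n m j : (2 * m + 3 <= n)%nat -> exists a, pj n m j = S (S (S a)).
Proof. intros H. exists (pj n m j - 3)%nat. unfold pj. lia. Qed.

Definition G0 n m x := sum_f_R0 (fun j => cc m j * (- PI * chebT (S (pj n m j)) x)) (2 * m - 1).
Definition G1 n m x := sum_f_R0 (fun j => cc m j * (- PI * (INR (S (pj n m j)) * chebU (pj n m j) x))) (2 * m - 1).
Definition G2 n m x := sum_f_R0 (fun j => cc m j * (- PI * (INR (S (pj n m j)) * dU (pj n m j - 1) x))) (2 * m - 1).
Definition G3 n m x := sum_f_R0 (fun j => cc m j * (- PI * (INR (S (pj n m j)) * ddU (pj n m j - 3) x))) (2 * m - 1).

Lemma G0_deriv n m x : (2 * m + 3 <= n)%nat -> -1 < x < 1 -> is_derive (G0 n m) x (G1 n m x).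
Proof.
  intros Hn Hx. unfold G0, G1.
  apply (is_derive_sum (fun j x => - PI * chebT (S (pj n m j)) x) (fun j x => - PI * (INR (S (pj n m j)) * chebU (pj n m j) x))).
  intros j. apply (is_derive_scal (fun x => chebT (S (pj n m j)) x) x (- PI)). apply chebT_deriv; auto.
Qed.

Lemma G1_deriv n m x : (2 * m + 3 <= n)%nat -> -1 < x < 1 -> is_derive (G1 n m) x (G2 n m x).
Proof.
  intros Hn Hx. unfold G1, G2.
  apply (is_derive_sum (fun j x => - PI * (INR (S (pj n m j)) * chebU (pj n m j) x)) (fun j x => - PI * (INR (S (pj n m j)) * dU (pj n m j - 1) x))).
  intros j. apply (is_derive_scal (fun x => INR (S (pj n m j)) * chebU (pj n m j) x) x (- PI)).
  apply (is_derive_scal (fun x => chebU (pj n m j) x) x (INR (S (pj n m j)))).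
  destruct (pj_ge3 n m j Hn) as [a Ha]. rewrite Ha. replace (S (S (S a)) - 1)%nat with (S (S a)) by lia. apply chebU_deriv; auto.
Qed.

Lemma G2_deriv n m x : (2 * m + 3 <= n)%nat -> -1 < x < 1 -> is_derive (G2 n m) x (G3 n m x).
Proof.
  intros Hn Hx. unfold G2, G3.
  apply (is_derive_sum (fun j x => - PI * (INR (S (pj n m j)) * dU (pj n m j - 1) x)) (fun j x => - PI * (INR (S (pj n m j)) * ddU (pj n m j - 3) x))).
  intros j. apply (is_derive_scal (fun x => INR (S (pj n m j)) * dU (pj n m j - 1) x) x (- PI)).
  apply (is_derive_scal (fun x => dU (pj n m j - 1) x) x (INR (S (pj n m j)))).
  destruct (pj_ge3 n m j Hn) as [a Ha]. rewrite Ha. replace (S (S (S a)) - 1)%nat with (S (S a)) by lia. replace (S (S (S a)) - 3)%nat with a by lia.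
  apply dU_deriv; auto.
Qed.

Lemma CPV_dens n m r : (1 <= m)%nat -> (2 * m + 3 <= n)%nat -> Rabs r < 1 ->
  is_CPV (dens n m) r (G0 n m r).
Proof.
  intros Hm Hn Hr. pose proof (Rabs_def2 _ _ Hr) as [Hr1 Hr2].
  apply (CPV_ext (fun s => sum_f_R0 (fun j => cc m j * Wp (S (pj n m j)) s) (2 * m - 1))).
  - lra.
  - intros s Hs. symmetry. apply dens_decomp; auto; lia.
  - unfold G0, chebT.
    apply (CPV_sum (fun j => Wp (S (pj n m j))) (cc m) (fun j => - PI * cos (INR (S (pj n m j)) * acos r))).
    + intros j x. apply Wp_cont.
    + lra.
    + intros j. apply CPV_Wp; auto. lia.
Qed.

Lemma CPV_val D r l : is_CPV D r l -> CPV D r = l.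
Proof.
  intros H. unfold CPV. destruct (excluded_middle_informative _) as [H'|H'].
  - destruct (constructive_indefinite_description _ H') as [l' Hl']. simpl.
    unfold is_CPV in *.
    exact (@filterlim_locally_unique R R_AbsRing R_NormedModule (at_right 0) (Proper_StrongProper _ (at_right_proper_filter 0)) _ l' l Hl' H).
  - exfalso. apply H'. exists l. exact H.
Qed.

Lemma loc_unit x : Rabs x < 1 -> locally x (fun t => Rabs t < 1).
Proof.
  intros Hx. assert (Hd : 0 < 1 - Rabs x) by lra.
  exists (mkposreal _ Hd). intros y Hy. simpl in Hy.
  unfold ball in Hy; simpl in Hy; unfold AbsRing_ball, abs, minus, plus, opp in Hy; simpl in Hy.
  pose proof (Rabs_triang_inv y x). unfold Rminus in H. lra.
Qed.

Section Main.
Variables (n m : nat).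
Hypothesis (Hm : (1 <= m)%nat) (Hn : (2 * m + 3 <= n)%nat).

Lemma hfp0_eq x : Rabs x < 1 -> hfp 0 (dens n m) x = G0 n m x.
Proof. intros Hx. change (CPV (dens n m) x = G0 n m x). apply CPV_val, CPV_dens; auto. Qed.

Lemma unit_int x : Rabs x < 1 -> -1 < x < 1.
Proof. intros H. apply Rabs_def2 in H. lra. Qed.

Lemma hfp1_eq x : Rabs x < 1 -> hfp 1 (dens n m) x = G1 n m x.
Proof.
  intros Hx. change (Derive (hfp 0 (dens n m)) x / INR 1 = G1 n m x).
  rewrite (Derive_ext_loc (hfp 0 (dens n m)) (G0 n m)).
  - rewrite (is_derive_unique _ _ _ (G0_deriv n m x Hn (unit_int x Hx))). simpl. field.
  - apply (filter_imp (fun t => Rabs t < 1)). intros t Ht. apply hfp0_eq; auto. apply loc_unit; auto.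
Qed.

Lemma hfp2_eq x : Rabs x < 1 -> hfp 2 (dens n m) x = G2 n m x / 2.
Proof.
  intros Hx. change (Derive (hfp 1 (dens n m)) x / INR 2 = G2 n m x / 2).
  rewrite (Derive_ext_loc (hfp 1 (dens n m)) (G1 n m)).
  - rewrite (is_derive_unique _ _ _ (G1_deriv n m x Hn (unit_int x Hx))). simpl. field.
  - apply (filter_imp (fun t => Rabs t < 1)). intros t Ht. apply hfp1_eq; auto. apply loc_unit; auto.
Qed.

Lemma G2h_deriv x : -1 < x < 1 -> is_derive (fun t => G2 n m t / 2) x (G3 n m x / 2).
Proof.
  intros Hx. apply (is_derive_ext (fun t => / 2 * G2 n m t)). { intros t. toR. field. }
  eapply is_derive_eq.
  apply (is_derive_scal (G2 n m) x (/ 2)). apply G2_deriv; auto.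
  unfold scal; simpl; unfold mult; simpl. field.
Qed.

Lemma hfp3_eq x : Rabs x < 1 -> hfp 3 (dens n m) x = G3 n m x / 6.
Proof.
  intros Hx. change (Derive (hfp 2 (dens n m)) x / INR 3 = G3 n m x / 6).
  rewrite (Derive_ext_loc (hfp 2 (dens n m)) (fun t => G2 n m t / 2)).
  - change (Derive (fun t : R => G2 n m t / 2) x / INR 3 = G3 n m x / 6).
    replace (Derive (fun t : R => G2 n m t / 2) x) with (G3 n m x / 2).
    simpl. field. symmetry. apply is_derive_unique. apply G2h_deriv. apply unit_int; auto.
  - apply (filter_imp (fun t => Rabs t < 1)). intros t Ht. apply hfp2_eq; auto. apply loc_unit; auto.
Qed.

End Main.

Lemma Kc_rel m : (1 <= m)%nat -> (-1) ^ (m + 1) * (1 / 2) ^ (2 * m + 2) = -1 / 8 / Kc m.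
Proof.
  intros Hm. destruct m as [|k]; [lia|]. clear Hm. unfold Kc.
  replace (S k - 1)%nat with k by lia.
  apply (Rmult_eq_reg_r ((-4) ^ k * -2)).
  2:{ apply Rmult_integral_contrapositive. split; [apply pow_nonzero|]; lra. }
  replace (-1 / 8 / ((-4) ^ k * -2) * ((-4) ^ k * -2)) with (-1/8)
    by (field; apply pow_nonzero; lra).
  induction k as [|k IH].
  - simpl. field.
  - replace (S (S k) + 1)%nat with (S (S k + 1)) by lia.
    replace (2 * S (S k) + 2)%nat with (S (S (2 * S k + 2))) by lia.
    rewrite <- IH. simpl pow. field.
Qed.

Lemma final_eq n m r : (1 <= m)%nat -> (2 * m + 3 <= n)%nat -> Rabs r < 1 ->
  G3 n m r / 6 = rhs7 n m r.
Proof.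
  intros Hm Hn Hr. pose proof (unit_int r Hr) as Hx.
  assert (Hw : 1 - r ^ 2 <> 0) by nra.
  unfold G3, rhs7. rewrite <- sum_div. rewrite scal_sum.
  apply sum_eq. intros j Hj. cbv zeta.
  destruct (pj_ge3 n m j Hn) as [a Ha]. rewrite Ha.
  replace (S (S (S a)) - 3)%nat with a by lia.
  replace (S (S (S a)) - 2)%nat with (S a) by lia.
  replace (S (S (S a)) + 2)%nat with (S (S (S (S (S a))))) by lia.
  rewrite ddU_val by auto. rewrite Kc_rel by auto. unfold cc.
  pose proof (Kc_nz m) as HK.
  rewrite !S_INR. field. auto.
Qed.

Theorem mainTheorem7 (m n : nat) (r : R) :
  (1 <= m)%nat -> (2 * m + 3 <= n)%nat -> Rabs r < 1 ->
  (exists l, is_CPV (dens n m) r l) /\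
  ex_derive (hfp 0 (dens n m)) r /\
  ex_derive (hfp 1 (dens n m)) r /\
  ex_derive (hfp 2 (dens n m)) r /\
  hfp 3 (dens n m) r = rhs7 n m r.
Proof.
  intros Hm Hn Hr. pose proof (unit_int r Hr) as Hx.
  split; [exists (G0 n m r); apply CPV_dens; auto|].
  split.
  { apply (ex_derive_ext_loc (G0 n m)).
    - apply (filter_imp (fun t => Rabs t < 1)). intros t Ht. symmetry. apply hfp0_eq; auto. apply loc_unit; auto.
    - exists (G1 n m r). apply G0_deriv; auto. }
  split.
  { apply (ex_derive_ext_loc (G1 n m)).
    - apply (filter_imp (fun t => Rabs t < 1)). intros t Ht. symmetry. apply hfp1_eq; auto. apply loc_unit; auto.
    - exists (G2 n m r). apply G1_deriv; auto. }
  split.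
  { apply (ex_derive_ext_loc (fun t => G2 n m t / 2)).
    - apply (filter_imp (fun t => Rabs t < 1)). intros t Ht. symmetry. apply hfp2_eq; auto. apply loc_unit; auto.
    - exists (G3 n m r / 2). apply G2h_deriv; auto. }
  rewrite hfp3_eq by auto. apply final_eq; auto.
Qed.
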